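(* Let $k\ge1$, $j\ge0$, $n=k+j$ and $N\in\mathcal{OC}_{k,j}$. Then $$\sum_{\{e',e''\}\subseteq \mathrm{ToT}(N),\ e'\neq e''}A_C(N(e',e''))=(2n^2+n-2)A_C(N)-(2n-1),$$ where the sum ranges over unordered pairs of distinct edges of $\mathrm{ToT}(N)$.
   Context: A (planted, binary) phylogenetic network on a taxon set $X$ with $|X|=n$ is a finite acyclic directed graph with: - a unique root $\rho$ of indegree 0 and outdegree 1; - exactly $n$ nodes of indegree 1 and outdegree 0 (leaves), labeled bijectively by $X$; - every other node is either a tree node (indegree 1, outdegree 2) or a reticulation node (indegree 2, outdegree 1). An edge $(p,q)$ is a tree edge if $q$ is a tree node or a leaf. A network is simplex if the child of every reticulation node is a leaf. A node $u$ is an ancestor of a node $v\neq u$ if some directed path from $\rho$ to $v$ passes through $u$. The ancestor number $\alpha_N(v)$ is the number of ancestors of $v$. The top tree component $C(N)$ of a simplex network $N$ is the set of tree nodes and leaves not descending from any reticulation node. Define $A_C(N)=\sum_{v\in C(N)}\alpha_N(v)$. $\mathrm{ToT}(N)$ is the set of tree edges $(u,v)$ of $N$ with $u$ not a reticulation node, i.e. the tree edges of the top tree component. For $k\ge1$, $j\ge0$, $\mathcal{OC}_{k,j}$ is the set of simplex networks on taxa $\{1,\dots,k+j\}$ with exactly $j$ reticulation nodes, whose children are the leaves $k+1,\dots,k+j$. For $N\in\mathcal{OC}_{k,j}$ and distinct $e'=(u,v)$, $e''=(s,t)$ in $\mathrm{ToT}(N)$, the network $N(e',e'')$ is obtained from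 $N$ as follows: - subdivide $e'$ into $(u,p),(p,v)$ and $e''$ into $(s,q),(q,t)$, with new nodes $p,q$; - add a new reticulation node $r$ with edges $(p,r),(q,r)$; - add a new leaf labeled $n+1$ with edge $(r,n+1)$. *)

(* Defs.v *)
From mathcomp Require Import all_boot.
From mathcomp Require Import boolp.
Set Implicit Arguments. Unset Strict Implicit. Unset Printing Implicit Defensive.

Record net := Net {
  V : seq nat;
  E : seq (nat * nat);         (* directed edges (parent, child) *)
  root : nat;
  lab : nat -> nat             (* leaf labelling (only meaningful on leaves) *)
}.

Section Net.
Variable N : net.

Definition arc (a b : nat) : bool := (a, b) \in E N.
Definition indeg (v : nat) : nat := count (fun e => e.2 == v) (E N).
Definition outdeg (v : nat) : nat := count (fun e => e.1 == v) (E N).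

Definition is_tree (v : nat) : bool := (v \in V N) && (indeg v == 1) && (outdeg v == 2).
Definition is_leaf (v : nat) : bool := (v \in V N) && (indeg v == 1) && (outdeg v == 0).
Definition is_ret  (v : nat) : bool := (v \in V N) && (indeg v == 2) && (outdeg v == 1).

Definition is_ancestor (u v : nat) : Prop :=
  u <> v /\ exists p : seq nat,
    path arc (root N) p /\ last (root N) p = v /\ u \in root N :: p.

Definition alpha (v : nat) : nat := count (fun u => `[< is_ancestor u v >]) (V N).

Definition desc_ret (v : nat) : Prop :=
  exists r, is_ret r /\ exists p : seq nat, path arc r p /\ last r p = v.

Definition in_top (v : nat) : bool := (is_tree v || is_leaf v) && `[< ~ desc_ret v >].

Definition A_C : nat := \sum_(v <- V N | in_top v) alpha v.

Definition ToT : seq (nat * nat) :=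
  [seq e <- E N | (is_tree e.2 || is_leaf e.2) && ~~ is_ret e.1].

Definition is_network (n : nat) : Prop :=
  [/\ [/\ uniq (V N), uniq (E N),
      all (fun e => (e.1 \in V N) && (e.2 \in V N)) (E N) &
      (forall v p, path arc v p -> last v p = v -> p = [::])],
      [/\ root N \in V N, indeg (root N) = 0, outdeg (root N) = 1 &
          forall v, v \in V N -> indeg v = 0 -> v = root N],
      (forall v, v \in V N -> v != root N -> [|| is_tree v, is_leaf v | is_ret v]) &
      perm_eq [seq lab N v | v <- V N & is_leaf v] (iota 1 n)].

Definition is_simplex : Prop :=
  forall r w, is_ret r -> arc r w -> is_leaf w.

Definition is_OC (k j : nat) : Prop :=
  [/\ is_network (k + j), is_simplex,
      count is_ret (V N) = j &
      perm_eq [seq lab N w | w <- V N & has (fun u => is_ret u && arc u w) (V N)]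
              (iota k.+1 j)].

End Net.

(* The network N(e',e'') (leaf labelled n+1), with fresh node names. *)
Definition insert_ret (n : nat) (N : net) (e1 e2 : nat * nat) : net :=
  let m := (\max_(x <- V N) x).+1 in
  let p := m in let q := m.+1 in let r := m.+2 in let l := m.+3 in
  Net (V N ++ [:: p; q; r; l])
      ([seq e <- E N | (e != e1) && (e != e2)] ++
         [:: (e1.1, p); (p, e1.2); (e2.1, q); (q, e2.2); (p, r); (q, r); (r, l)])
      (root N)
      (fun x => if x == l then n.+1 else lab N x).

(* Main.v *)
Require Import Defs.
From mathcomp Require Import all_boot all_order all_algebra.
From mathcomp Require Import boolp.
From mathcomp Require Import zify.
Import GRing.Theory.

Module G1.
Set Implicit Arguments. Unset Strict Implicit. Unset Printing Implicit Defensive.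

Lemma count2 (T : eqType) (P : pred T) (s : seq T) x y :
  x != y -> x \in s -> y \in s -> P x -> P y -> 1 < count P s.
Proof.
move=> xy xs ys Px Py; rewrite -size_filter.
have -> : 2 = size [:: x; y] by [].
apply: uniq_leq_size; first by rewrite /= inE xy.
by move=> z; rewrite !inE => /orP[]/eqP->; rewrite mem_filter ?Px ?Py.
Qed.

Section Gen.
Variable G : net.
Local Notation arc := (Defs.arc G).
Local Notation rt := (Defs.root G).

Lemma in_arc_unique y a b : indeg G y = 1 -> arc a y -> arc b y -> a = b.
Proof.
move=> h ha hb; case: (eqVneq a b) => // ab; exfalso.
have := count2 (P := fun e : nat * nat => e.2 == y) _ ha hb.
rewrite /= eqxx -/(indeg G y) h; have -> : (a, y) != (b, y) by apply: contra ab => /eqP [->].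
by move=> /(_ isT isT isT).
Qed.

Lemma no_arc_in y a : indeg G y = 0 -> ~~ arc a y.
Proof.
move=> h; apply/negP => ha.
have : 0 < indeg G y by rewrite /indeg -has_count; apply/hasP; exists (a, y).
by rewrite h.
Qed.

Lemma no_arc_out y a : outdeg G y = 0 -> ~~ arc y a.
Proof.
move=> h; apply/negP => ha.
have : 0 < outdeg G y by rewrite /outdeg -has_count; apply/hasP; exists (y, a).
by rewrite h.
Qed.

Definition chain x c := [/\ path arc rt c, last rt c = x & all (fun y => indeg G y == 1) c].

Lemma path_pred h c y : path arc h c -> y \in c -> exists2 z, z \in h :: c & arc z y.
Proof.
elim: c h => // a c IH h /= /andP[ha pc]; rewrite inE => /orP[/eqP->|yc].
  by exists h; rewrite ?inE ?eqxx //.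
have [z zc zy] := IH _ pc yc; exists z => //; by rewrite in_cons zc orbT.
Qed.

Lemma chain_back x c : indeg G rt = 0 -> chain x c ->
  forall q w, path arc w q -> last w q \in rt :: c -> all (mem (rt :: c)) (w :: q).
Proof.
move=> h0 [pc _ ac]; elim/last_ind => [w _ /= ->//|q y IH w].
rewrite rcons_path last_rcons => /andP[pq ay] yc.
have zc : last w q \in rt :: c.
  move: yc; rewrite inE => /orP[/eqP yr|yc].
    by move: ay; rewrite yr => ay; have := no_arc_in (last w q) h0; rewrite ay.
  have [z zc zy] := path_pred pc yc.
  have iy : indeg G y = 1 by apply/eqP; move/allP: ac; apply.
  by rewrite (in_arc_unique iy ay zy).
have := IH w pq zc; rewrite -cats1 -cat_cons all_cat => -> /=.
by rewrite yc.
Qed.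

Lemma anc_chain x c : indeg G rt = 0 -> chain x c ->
  forall u, is_ancestor G u x <-> (u <> x /\ u \in rt :: c).
Proof.
move=> h0 ch u; split.
  move=> [ux [p [pp [lp up]]]]; split => //.
  have xc : x \in rt :: c by case: (ch) => _ <- _; exact: mem_last.
  have := chain_back h0 ch pp; rewrite lp => /(_ xc) /allP; apply; exact: up.
move=> [ux uc]; split => //; exists c; case: ch => pc lc _; split => //.
Qed.

Lemma nodesc_chain x c : indeg G rt = 0 -> chain x c -> ~ desc_ret G x.
Proof.
move=> h0 ch [r [rr [q [pq lq]]]].
have := chain_back h0 ch pq; rewrite lq.
have xc : x \in rt :: c by case: (ch) => _ <- _; exact: mem_last.
move=> /(_ xc) /= /andP[]; rewrite inE => /orP[/eqP rE|rc] _.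
  by move: rr; rewrite rE /is_ret h0 andbF.
case: ch => _ _ /allP /(_ r rc) /eqP.
by move: rr; rewrite /is_ret => /andP[/andP[_ /eqP->]].
Qed.

Lemma anc_bool x c : indeg G rt = 0 -> chain x c ->
  forall u, `[< is_ancestor G u x >] = (u != x) && (u \in rt :: c).
Proof.
move=> h0 ch u; apply: (asbool_equiv_eqP andP); apply: iff_trans (anc_chain h0 ch u) _.
by split => [[/eqP ux uc]|[/eqP ux uc]].
Qed.

End Gen.

End G1.
Import G1.

Module G2.
Set Implicit Arguments. Unset Strict Implicit. Unset Printing Implicit Defensive.

Section NetN.
Variable N : net.
Variables k j : nat.
Hypothesis hOC : is_OC N k j.
Local Notation arc := (Defs.arc N).
Local Notation rt := (Defs.root N).
Local Notation VN := (Defs.V N).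
Local Notation EN := (Defs.E N).

Lemma hnet : is_network N (k + j). Proof. by case: hOC. Qed.
Lemma uV : uniq VN. Proof. by case: hnet => [[]]. Qed.
Lemma uE : uniq EN. Proof. by case: hnet => [[]]. Qed.
Lemma endV : all (fun e => (e.1 \in VN) && (e.2 \in VN)) EN. Proof. by case: hnet => [[]]. Qed.
Lemma acyc v p : path arc v p -> last v p = v -> p = [::]. Proof. have [[_ _ _ h] _ _ _] := hnet; exact: h. Qed.
Lemma rV : rt \in VN. Proof. by case: hnet => _ []. Qed.
Lemma r0 : indeg N rt = 0. Proof. by case: hnet => _ []. Qed.
Lemma r1 : outdeg N rt = 1. Proof. by case: hnet => _ []. Qed.
Lemma ronly v : v \in VN -> indeg N v = 0 -> v = rt. Proof. have [_ [_ _ _ h] _ _] := hnet; exact: h. Qed.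
Lemma cls v : v \in VN -> v != rt -> [|| is_tree N v, is_leaf N v | is_ret N v].
Proof. have [_ _ h _] := hnet; exact: h. Qed.
Lemma simp : is_simplex N. Proof. by case: hOC. Qed.

Lemma arcV a b : arc a b -> (a \in VN) /\ (b \in VN).
Proof. by move=> ab; have /andP[] := allP endV _ ab. Qed.

Lemma pathV w c : path arc w c -> all (mem VN) c.
Proof.
elim: c w => //= a c IH w /andP[wa pc]; rewrite (IH _ pc) andbT.
by case: (arcV wa).
Qed.

Lemma cyc_of w c : path arc w c -> w \in c -> False.
Proof.
move=> pc wc; case/path.splitP: wc pc => p1 p2; rewrite cat_path => /andP[pp _].
by have := acyc pp; rewrite last_rcons => /(_ erefl) /eqP; rewrite -size_eq0 size_rcons.
Qed.

Lemma path_uniq w c : path arc w c -> uniq (w :: c).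
Proof.
elim: c w => // a c IH w pc; move: (pc) => /= /andP[_ pc'].
have := IH _ pc'; rewrite /= => ->; rewrite andbT.
apply/negP => wc; exact: (cyc_of pc wc).
Qed.

Lemma walk x n : x \in VN -> (exists c, path arc rt c /\ last rt c = x) \/
  (exists w c, [/\ w \in VN, path arc w c, last w c = x & size c = n]).
Proof.
move=> xV; elim: n => [|n [IH|[w [c [wV pc lc sc]]]]]; first by right; exists x, [::].
- by left.
case: (eqVneq w rt) => [wr|wr]; first by left; exists c; rewrite -wr.
have : 0 < indeg N w.
  case: (posnP (indeg N w)) => // h; by move: wr; rewrite (ronly wV h) eqxx.
rewrite /indeg -has_count => /hasP [[w' w0] we /= /eqP ew]; subst w0.
right; exists w', (w :: c); split => //=.
- by have [] := arcV we.
- by rewrite /Defs.arc we.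
- by rewrite sc.
Qed.

Lemma reach x : x \in VN -> exists c, path arc rt c /\ last rt c = x.
Proof.
move=> xV; case: (walk (size VN) xV) => // [[w [c [wV pc lc sc]]]].
have u := path_uniq pc.
have : size (w :: c) <= size VN.
  apply: uniq_leq_size => // z; rewrite in_cons => /orP[/eqP->//|zc].
  by have /allP := pathV pc; apply.
by rewrite /= sc ltnn.
Qed.

Definition cr x := has (fun u => is_ret N u && arc u x) VN.

Lemma deg_tree v : is_tree N v -> indeg N v = 1 /\ outdeg N v = 2.
Proof. by case/andP => /andP[_ /eqP ->] /eqP ->. Qed.
Lemma deg_leaf v : is_leaf N v -> indeg N v = 1 /\ outdeg N v = 0.
Proof. by case/andP => /andP[_ /eqP ->] /eqP ->. Qed.
Lemma deg_ret v : is_ret N v -> indeg N v = 2 /\ outdeg N v = 1.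
Proof. by case/andP => /andP[_ /eqP ->] /eqP ->. Qed.

Lemma tl_indeg v : is_tree N v || is_leaf N v -> indeg N v = 1.
Proof. by case/orP => [/deg_tree|/deg_leaf] []. Qed.

Lemma desc_cr x : is_tree N x || is_leaf N x -> desc_ret N x <-> cr x.
Proof.
move=> tl; split.
  move=> [r [rr [[|w q] [pq lq]]]].
    by move: lq tl => /= <-; rewrite /is_tree /is_leaf (deg_ret rr).1 /= !andbF.
  move: pq => /= /andP[rw pq]; have lw := simp rr rw.
  case: q pq lq => [_ /= wx|w' q /= /andP[ww' _] _].
    apply/hasP; exists r; first by case/andP: rr => /andP[]. by rewrite rr -wx.
  by have := @no_arc_out N w w' (deg_leaf lw).2; rewrite ww'.
move=> /hasP[r _ /andP[rr rx]]; exists r; split => //; exists [:: x]; split => //=.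
by rewrite rx.
Qed.

Lemma in_topE x : in_top N x = (is_tree N x || is_leaf N x) && ~~ cr x.
Proof.
rewrite /in_top; case tl: (_ || _) => //=.
by rewrite asbool_neg (asbool_equiv_eq (desc_cr tl)) asboolb.
Qed.

Lemma in_top_V x : in_top N x -> x \in VN.
Proof. by rewrite in_topE /is_tree /is_leaf => /andP[/orP[]/andP[]/andP[] ->]. Qed.

Lemma chain_ex x : in_top N x -> exists c, chain N x c.
Proof.
move=> itx; have xV := in_top_V itx; have [c [pc lc]] := reach xV.
exists c; split => //; apply/allP => y yc.
move: itx; rewrite /in_top => /andP[tlx /asboolP ndx].
case/splitPr: yc pc lc => c1 c2; rewrite cat_path /= => /andP[_ /andP[ay pc2]] lc.
have [_ yV] := arcV ay.
have yr : y != rt.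
  apply/eqP => yr; rewrite yr in ay; have := @no_arc_in N rt (last rt c1) r0; by rewrite ay.
have := cls yV yr; case/or3P => [/deg_tree[->]|/deg_leaf[->]|ry] //.
exfalso; case: c2 pc2 lc => [_|z c3 /= /andP[yz pc3]]; rewrite last_cat /=.
  by move=> yx; move: tlx; rewrite -yx /is_tree /is_leaf (deg_ret ry).1 /= !andbF.
have lz := simp ry yz.
case: c3 pc3 => [_ /= zx|z' c4 /= /andP[zz' _] _].
  apply: ndx; exists y; split => //; exists [:: z]; rewrite /= yz zx; split => //.
by have := @no_arc_out N z z' (deg_leaf lz).2; rewrite zz'.
Qed.


Lemma anc_root x : in_top N x -> is_ancestor N rt x.
Proof.
move=> itx; have [c ch] := chain_ex itx.
apply/(anc_chain r0 ch); split; last by rewrite mem_head.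
move=> xr; move: itx; rewrite -xr in_topE /is_tree /is_leaf r0 /= !andbF.
by [].
Qed.

Lemma chain_pre x c u : chain N x c -> u \in c -> exists c', chain N u c' /\ {subset c' <= c}.
Proof.
move=> [pc lc ac] uc; case/splitPr: uc pc lc ac => c1 c2.
rewrite cat_path /= all_cat /= => /andP[p1 /andP[au _]] _ /andP[a1 /andP[iu _]].
exists (rcons c1 u); split.
  split; rewrite ?last_rcons //.
    by rewrite rcons_path p1 au.
  by rewrite all_rcons iu a1.
by move=> z; rewrite mem_rcons mem_cat !inE => /orP[->|->]; rewrite ?orbT.
Qed.

Lemma anc_top x u : in_top N x -> is_ancestor N u x -> u = rt \/ in_top N u.
Proof.
move=> itx; have [c ch] := chain_ex itx.
move/(anc_chain r0 ch) => [ux]; rewrite inE => /orP[/eqP->|uc]; first by left.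
right; have [c' [ch' _]] := chain_pre ch uc.
case: (ch) => pc _ /allP ac.
have iu : indeg N u = 1 by apply/eqP; apply: ac.
have uV : u \in VN by have /allP := pathV pc; apply.
have ur : u != rt by apply/eqP => ur; move: iu; rewrite ur r0.
rewrite /in_top; apply/andP; split; last by apply/asboolP; exact: (nodesc_chain r0 ch').
by case/or3P: (cls uV ur) => [->|->|/deg_ret[]]; rewrite ?orbT // iu.
Qed.

Lemma ToT_in e : e \in ToT N -> [/\ e \in EN, in_top N e.2 & ~~ is_ret N e.1].
Proof.
rewrite mem_filter => /andP[/andP[tl nr] eE]; split => //.
rewrite in_topE tl /=; apply/hasP => [[r _ /andP[rr re]]].
have ee : arc e.1 e.2 by rewrite /Defs.arc -surjective_pairing.
by move: nr; rewrite -(in_arc_unique (tl_indeg tl) re ee) rr.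
Qed.

Lemma ToT_perm : perm_eq (map snd (ToT N)) (filter (in_top N) VN).
Proof.
apply: uniq_perm; last first.
- move=> v; rewrite mem_filter; apply/mapP/andP.
    by move=> [e /ToT_in [_ ite _] ->]; split => //; exact: in_top_V.
  move=> [itv vV]; move: (itv); rewrite in_topE => /andP[tl ncr].
  have : 0 < indeg N v by rewrite tl_indeg.
  rewrite /indeg -has_count => /hasP [[w v'] we /= /eqP ev]; subst v'.
  exists (w, v) => //; rewrite mem_filter we andbT /= tl /=.
  apply: contra ncr => rw; apply/hasP; exists w => //; first by have [] := arcV we.
  by rewrite rw.
- exact: filter_uniq uV.
rewrite map_inj_in_uniq; first exact: filter_uniq uE.
move=> e e' /ToT_in [eE ite _] /ToT_in [eE' ite' _] h.
have tl : is_tree N e.2 || is_leaf N e.2 by move: ite; rewrite in_topE => /andP[].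
have a1 : arc e.1 e.2 by rewrite /Defs.arc -surjective_pairing.
have a2 : arc e'.1 e.2 by rewrite h /Defs.arc -surjective_pairing.
have := in_arc_unique (tl_indeg tl) a1 a2.
by case: e e' h {eE eE' ite ite' tl a1 a2} => [a b] [a' b'] /= -> ->.
Qed.

Lemma count_sum (T : Type) (P : pred T) s : count P s = \sum_(x <- s) (P x : nat).
Proof. by elim: s => [|a s IH]; rewrite ?big_nil ?big_cons //= IH. Qed.

Lemma sum_indeg : \sum_(v <- VN) indeg N v = size EN.
Proof.
rewrite /indeg; under eq_bigr do rewrite count_sum.
rewrite exchange_big /= -sum1_size big_seq [in RHS]big_seq; apply: eq_bigr => e eE.
rewrite -count_sum (eq_count (a2 := pred1 e.2)); last by move=> v /=; rewrite eq_sym.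
by rewrite count_uniq_mem ?uV //; have /andP[] := allP endV _ eE => _ ->.
Qed.

Lemma sum_outdeg : \sum_(v <- VN) outdeg N v = size EN.
Proof.
rewrite /outdeg; under eq_bigr do rewrite count_sum.
rewrite exchange_big /= -sum1_size big_seq [in RHS]big_seq; apply: eq_bigr => e eE.
rewrite -count_sum (eq_count (a2 := pred1 e.1)); last by move=> v /=; rewrite eq_sym.
by rewrite count_uniq_mem ?uV //; have /andP[] := allP endV _ eE => ->.
Qed.

Lemma degs v : v \in VN ->
  indeg N v = (is_tree N v : nat) + is_leaf N v + 2 * is_ret N v /\
  outdeg N v = ((v == rt) : nat) + 2 * is_tree N v + is_ret N v.
Proof.
move=> vV; rewrite /is_tree /is_leaf /is_ret vV /=.
case: (eqVneq v rt) => [->|vr]; first by rewrite r0 r1.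
case/or3P: (cls vV vr); rewrite /is_tree /is_leaf /is_ret vV /= => /andP[/eqP-> /eqP->] //.
Qed.

Lemma top_cr v : v \in VN -> (in_top N v : nat) + cr v = (is_tree N v : nat) + is_leaf N v.
Proof.
move=> vV; rewrite in_topE.
case crv: (cr v).
  have [r _ /andP[rr rv]] := hasP crv.
  have lv := simp rr rv; rewrite lv orbT /=.
  have tv : is_tree N v = false.
    by move: lv; rewrite /is_tree /is_leaf => /andP[_ /eqP ->]; rewrite andbF.
  by rewrite tv.
rewrite /= andbT addn0.
case tv: (is_tree N v); case lv: (is_leaf N v) => //.
by move: tv lv; rewrite /is_tree /is_leaf => /andP[_ /eqP->] /andP[].
Qed.

Lemma size_C : size (filter (in_top N) VN) = 2 * (k + j) - 1.
Proof.
have [_ _ cj lj] := hOC.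
have [_ _ _ ll] := hnet.
have L : count (is_leaf N) VN = k + j.
  by rewrite -size_filter -(size_map (lab N)) (perm_size ll) size_iota.
have CR : count cr VN = j.
  by rewrite -size_filter -(size_map (lab N)) (perm_size lj) size_iota.
have R1 : count (pred1 rt) VN = 1 by rewrite count_uniq_mem ?uV ?rV.
have e1 := sum_indeg; have e2 := sum_outdeg.
rewrite (eq_big_seq _ (fun v vV => (degs vV).1)) in e1.
rewrite (eq_big_seq _ (fun v vV => (degs vV).2)) in e2.
rewrite !big_split /= !big1_eq -!count_sum in e1 e2.
have e3 : \sum_(v <- VN) ((in_top N v : nat) + cr v) = \sum_(v <- VN) ((is_tree N v : nat) + is_leaf N v).
  by apply: eq_big_seq => v vV; rewrite top_cr.
rewrite !big_split /= -!count_sum in e3.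
rewrite size_filter.
have R1' : count (fun v => v == rt) VN = 1 by rewrite -R1.
rewrite R1' in e2.
lia.
Qed.

End NetN.

End G2.
Import G2.

Module G3.
Set Implicit Arguments. Unset Strict Implicit. Unset Printing Implicit Defensive.

Section Ins.
Variable N : net.
Variables k j n : nat.
Hypothesis hOC : is_OC N k j.
Variables e1 e2 : nat * nat.
Hypotheses (h1 : e1 \in ToT N) (h2 : e2 \in ToT N) (h12 : e1 != e2).
Local Notation arc := (Defs.arc N).
Local Notation rt := (Defs.root N).
Local Notation VN := (Defs.V N).
Local Notation EN := (Defs.E N).
Local Notation N' := (insert_ret n N e1 e2).
Local Notation arc' := (Defs.arc N').
Local Notation M := (\max_(x <- VN) x).
Local Notation p := M.+1.
Local Notation q := M.+2.
Local Notation r := M.+3.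
Local Notation l := M.+4.
Local Notation u := e1.1.
Local Notation v := e1.2.
Local Notation s := e2.1.
Local Notation t := e2.2.
Local Notation newE := [:: (u, p); (p, v); (s, q); (q, t); (p, r); (q, r); (r, l)].

Lemma VN' : V N' = VN ++ [:: p; q; r; l]. Proof. by []. Qed.
Lemma EN' : E N' = [seq e <- EN | (e != e1) && (e != e2)] ++ newE. Proof. by []. Qed.
Lemma rootN' : Defs.root N' = rt. Proof. by []. Qed.

Lemma fresh y : y \in VN -> y < p.
Proof. by move=> yV; rewrite ltnS; exact: (@leq_bigmax_seq _ VN xpredT (fun x => x) y yV isT). Qed.

Lemma e1E : e1 \in EN. Proof. by case: (ToT_in hOC h1). Qed.
Lemma e2E : e2 \in EN. Proof. by case: (ToT_in hOC h2). Qed.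
Lemma itv : in_top N v. Proof. by case: (ToT_in hOC h1). Qed.
Lemma itt : in_top N t. Proof. by case: (ToT_in hOC h2). Qed.
Lemma uV : u \in VN. Proof. by have /andP[] := allP (endV hOC) _ e1E. Qed.
Lemma vV : v \in VN. Proof. by have /andP[] := allP (endV hOC) _ e1E. Qed.
Lemma sV : s \in VN. Proof. by have /andP[] := allP (endV hOC) _ e2E. Qed.
Lemma tV : t \in VN. Proof. by have /andP[] := allP (endV hOC) _ e2E. Qed.
Lemma a1 : arc u v. Proof. by rewrite /Defs.arc -surjective_pairing e1E. Qed.
Lemma a2 : arc s t. Proof. by rewrite /Defs.arc -surjective_pairing e2E. Qed.
Lemma iv1 : indeg N v = 1.
Proof. by move: itv; rewrite (in_topE hOC) => /andP[/tl_indeg]. Qed.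
Lemma it1 : indeg N t = 1.
Proof. by move: itt; rewrite (in_topE hOC) => /andP[/tl_indeg]. Qed.
Lemma vt : v != t.
Proof.
apply/eqP => vt; have a2' : arc s v by rewrite vt a2.
have us := in_arc_unique iv1 a1 a2'.
by move: h12; rewrite [e1]surjective_pairing [e2]surjective_pairing us vt eqxx.
Qed.

Lemma count_E' (P : pred (nat * nat)) :
  count P (E N') + P e1 + P e2 = count P EN + count P newE.
Proof.
have pe : perm_eq EN (e1 :: e2 :: [seq e <- EN | (e != e1) && (e != e2)]).
  apply: uniq_perm; first exact: uE hOC.
    rewrite /= !inE !mem_filter !eqxx /= !andbF /= filter_uniq ?(uE hOC) // orbF.
    by rewrite andbT.
  move=> e; rewrite !inE mem_filter.
  case: (eqVneq e e1) => [->|]; first by rewrite e1E.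
  case: (eqVneq e e2) => [->|] //=; first by rewrite e2E.
rewrite (permP pe) EN' count_cat /=; lia.
Qed.

Ltac neqs := rewrite ?(ltn_eqF (fresh uV), gtn_eqF (fresh uV), ltn_eqF (fresh vV), gtn_eqF (fresh vV),
  ltn_eqF (fresh sV), gtn_eqF (fresh sV), ltn_eqF (fresh tV), gtn_eqF (fresh tV)).

Lemma pq_neq : [/\ (p == q) = false, (p == r) = false, (p == l) = false, (q == r) = false &
   [/\ (q == l) = false, (r == l) = false, (q == p) = false, (r == p) = false &
   [/\ (l == p) = false, (r == q) = false & (l == q) = false]]].
Proof. by repeat split; apply/eqP; lia. Qed.


Lemma freshF y : y \in VN -> [/\ (p == y) = false, (q == y) = false, (r == y) = false & (l == y) = false].
Proof. by move=> /fresh yp; repeat split; apply/eqP; lia. Qed.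

Lemma indegV y : y \in VN -> indeg N' y = indeg N y.
Proof.
move=> yV; have [f1 f2 f3 f4] := freshF yV.
have := count_E' (fun e => e.2 == y); rewrite /= f1 f2 f3 f4 /indeg /=; lia.
Qed.

Lemma outdegV y : y \in VN -> outdeg N' y = outdeg N y.
Proof.
move=> yV; have [f1 f2 f3 f4] := freshF yV.
have := count_E' (fun e => e.1 == y); rewrite /= f1 f2 f3 /outdeg /=; lia.
Qed.

Lemma count0 (P : pred (nat * nat)) : (forall e, e \in EN -> P e = false) -> count P EN = 0.
Proof. by move=> h; apply/eqP; rewrite -leqn0 leqNgt -has_count; apply/hasP => [[e /h ->]]. Qed.

Lemma fresh_deg z : z \notin VN -> indeg N' z = count (fun e => e.2 == z) newE /\ outdeg N' z = count (fun e => e.1 == z) newE.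
Proof.
move=> zV; have zne : forall y, y \in VN -> (y == z) = false.
  by move=> y yV; apply: contraNF zV => /eqP <-.
have c2 := count_E' (fun e => e.2 == z); have c1 := count_E' (fun e => e.1 == z).
rewrite count0 in c2; last by move=> e eE; have /andP[_ /zne] := allP (endV hOC) _ eE.
rewrite count0 in c1; last by move=> e eE; have /andP[/zne ? _] := allP (endV hOC) _ eE.
rewrite /= (zne _ vV) (zne _ tV) in c2; rewrite /= (zne _ uV) (zne _ sV) in c1.
rewrite /indeg /outdeg /= (zne _ vV) (zne _ tV) (zne _ uV) (zne _ sV); split; lia.
Qed.

Lemma pV : p \notin VN. Proof. by apply/negP => /fresh; rewrite ltnn. Qed.
Lemma qV : q \notin VN. Proof. by apply/negP => /fresh; lia. Qed.
Lemma rV' : r \notin VN. Proof. by apply/negP => /fresh; lia. Qed.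
Lemma lV : l \notin VN. Proof. by apply/negP => /fresh; lia. Qed.

Ltac kill_eqs := rewrite ?eqxx; repeat match goal with |- context[?a == ?b] =>
  let H := fresh in (have H : (a == b) = false by apply/eqP; lia); rewrite H; clear H end.

Lemma freshs : [/\ u < p, v < p, s < p & t < p].
Proof. by split; apply: fresh; rewrite ?uV ?vV ?sV ?tV. Qed.

Lemma degp : indeg N' p = 1 /\ outdeg N' p = 2.
Proof. have [-> ->] := fresh_deg pV; have [? ? ? ?] := freshs; rewrite /=; kill_eqs; by []. Qed.
Lemma degq : indeg N' q = 1 /\ outdeg N' q = 2.
Proof. have [-> ->] := fresh_deg qV; have [? ? ? ?] := freshs; rewrite /=; kill_eqs; by []. Qed.
Lemma degr : indeg N' r = 2 /\ outdeg N' r = 1.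
Proof. have [-> ->] := fresh_deg rV'; have [? ? ? ?] := freshs; rewrite /=; kill_eqs; by []. Qed.
Lemma degl : indeg N' l = 1 /\ outdeg N' l = 0.
Proof. have [-> ->] := fresh_deg lV; have [? ? ? ?] := freshs; rewrite /=; kill_eqs; by []. Qed.


Lemma typesV y : y \in VN ->
  [/\ is_tree N' y = is_tree N y, is_leaf N' y = is_leaf N y & is_ret N' y = is_ret N y].
Proof. by move=> yV; rewrite /is_tree /is_leaf /is_ret VN' mem_cat yV /= indegV ?outdegV. Qed.

Lemma arc'_new : [/\ arc' u p, arc' p v, arc' s q, arc' q t & [/\ arc' p r, arc' q r & arc' r l]].
Proof. by rewrite /Defs.arc EN' !mem_cat !inE !eqxx /= !orbT. Qed.

Lemma arc'_keep a b : arc a b -> b != v -> b != t -> arc' a b.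
Proof.
move=> ab bv bt; move: ab; rewrite /Defs.arc EN' mem_cat mem_filter => ->; rewrite andbT; apply/orP; left.
apply/andP; split; [apply: contra bv | apply: contra bt];
  by move=> /eqP e; rewrite -e.
Qed.

Definition ins b := if b == v then [:: p; v] else if b == t then [:: q; t] else [:: b].
Definition insc c := flatten (map ins c).

Lemma ins_path a b : arc a b -> path arc' a (ins b) /\ last a (ins b) = b.
Proof.
have [n1 n2 n3 n4 _] := arc'_new.
move=> ab; rewrite /ins; case: (eqVneq b v) => [bv|bv].
  subst b; have au := in_arc_unique iv1 ab a1; subst a; by rewrite /= n1 n2.
case: (eqVneq b t) => [bt|bt].
  subst b; have au := in_arc_unique it1 ab a2; subst a; by rewrite /= n3 n4.
by rewrite /= arc'_keep.
Qed.

Lemma insc_cons b c : insc (b :: c) = ins b ++ insc c. Proof. by []. Qed.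

Lemma insc_path w c : path arc w c -> path arc' w (insc c) /\ last w (insc c) = last w c.
Proof.
elim: c w => [|b c IH] w //= /andP[wb pc].
have [pi li] := ins_path wb; have [pc' lc'] := IH _ pc.
by rewrite insc_cons cat_path pi li pc' last_cat li lc'.
Qed.

Lemma mem_inscV y c : y != p -> y != q -> (y \in insc c) = (y \in c).
Proof.
move=> yp yq; elim: c => [|b c IH] //; rewrite insc_cons mem_cat IH in_cons /ins.
case: (eqVneq b v) => [eb|bv]; first by subst b; rewrite !inE (negbTE yp).
case: (eqVneq b t) => [eb|bt]; first by subst b; rewrite !inE (negbTE yq).
by rewrite inE.
Qed.

Lemma mem_inscp c : p \notin c -> (p \in insc c) = (v \in c).
Proof.
have [? ? ? ?] := freshs.
elim: c => [|b c IH] //; rewrite insc_cons mem_cat !in_cons negb_or => /andP[pb pc].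
rewrite IH // /ins.
case: (eqVneq b v) => [eb|bv]; first by subst b; rewrite !inE eqxx.
case: (eqVneq b t) => [eb|bt]; first by subst b; rewrite !inE; kill_eqs.
by rewrite inE (negbTE pb).
Qed.

Lemma mem_inscq c : q \notin c -> (q \in insc c) = (t \in c).
Proof.
have [? ? ? ?] := freshs.
elim: c => [|b c IH] //; rewrite insc_cons mem_cat !in_cons negb_or => /andP[pb pc].
rewrite IH // /ins.
case: (eqVneq b v) => [eb|bv].
  subst b; have tv : (t == v) = false by rewrite eq_sym (negbTE vt).
  by rewrite !inE tv; kill_eqs.
case: (eqVneq b t) => [eb|bt]; first by subst b; rewrite !inE eqxx.
by rewrite inE (negbTE pb).
Qed.

Lemma insc_sub c z : z \in insc c -> [\/ z \in c, z = p | z = q].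
Proof.
elim: c => [|b c IH] //; rewrite insc_cons mem_cat => /orP[zb|zc]; last first.
  by case: (IH zc) => [zc'|->|->]; [constructor 1; rewrite in_cons zc' orbT|constructor 2|constructor 3].
move: zb; rewrite /ins; case: (eqVneq b v) => [eb|bv].
  by subst b; rewrite !inE => /orP[/eqP->|/eqP->]; [constructor 2 | constructor 1; rewrite eqxx].
case: (eqVneq b t) => [eb|bt].
  by subst b; rewrite !inE => /orP[/eqP->|/eqP->]; [constructor 3 | constructor 1; rewrite eqxx].
by rewrite !inE => /eqP->; constructor 1; rewrite eqxx.
Qed.

Lemma chain_ins x c : chain N x c -> chain N' x (insc c).
Proof.
move=> [pc lc ac]; have [pc' lc'] := insc_path pc.
split; rewrite ?rootN' ?lc' //.
apply/allP => z /insc_sub [zc||] ; last 2 first.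
- by move=> ->; rewrite degp.1.
- by move=> ->; rewrite degq.1.
have zV : z \in VN by have /allP := pathV hOC pc; apply.
by rewrite indegV //; apply: (allP ac).
Qed.


Definition lev a x := (a == x) || `[< is_ancestor N a x >].

Lemma r0' : indeg N' (Defs.root N') = 0.
Proof. by rewrite rootN' indegV ?(rV hOC) ?(r0 hOC). Qed.

Lemma top_nr x : in_top N x -> x != rt.
Proof.
move=> itx; apply/eqP => xr; move: itx; rewrite (in_topE hOC) xr /is_tree /is_leaf (r0 hOC).
by rewrite /= !andbF.
Qed.

Lemma chain_last x c : chain N x c -> x != rt -> x \in c.
Proof.
case: c => [[_ /= -> _]|a c [_ lc _] _]; first by rewrite eqxx.
by rewrite -lc /=; exact: mem_last.
Qed.

Lemma chainV x c : chain N x c -> forall y, y \in c -> y \in VN.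
Proof. by move=> [pc _ _] y yc; have /allP := pathV hOC pc; apply. Qed.

Lemma desc_ins x : desc_ret N x -> desc_ret N' x.
Proof.
move=> [r0 [rr [q0 [pq lq]]]]; exists r0; split.
  have r0V : r0 \in VN by move: rr => /andP[/andP[]].
  by have [_ _ ->] := typesV r0V.
by exists (insc q0); have [pq' lq'] := insc_path pq; rewrite lq'.
Qed.

Lemma in_top'V x : x \in VN -> in_top N' x = in_top N x.
Proof.
move=> xV; rewrite /in_top; have [t1 t2 _] := typesV xV; rewrite t1 t2.
case tl: (_ || _) => //=.
case: (asboolP (desc_ret N x)) => [d|nd].
  by rewrite !asboolF // => /(_ (desc_ins d)).
have itx : in_top N x by rewrite /in_top tl; apply/asboolP.
have [c ch] := chain_ex hOC itx.
by rewrite !asboolT //; exact: (nodesc_chain r0' (chain_ins ch)).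
Qed.

Lemma p_neq_V y : y \in VN -> [/\ y != p, y != q, y != r & y != l].
Proof. by move=> /fresh yp; repeat split; apply/eqP; lia. Qed.

Lemma anc'V x y : in_top N x -> y \in VN -> is_ancestor N' y x <-> is_ancestor N y x.
Proof.
move=> itx yV; have [c ch] := chain_ex hOC itx.
rewrite (anc_chain r0' (chain_ins ch)) (anc_chain (r0 hOC) ch) rootN' !in_cons.
have [yp yq _ _] := p_neq_V yV.
by rewrite mem_inscV.
Qed.

Lemma lev_chain a x c : in_top N x -> chain N x c -> a != rt -> lev a x = (a \in c).
Proof.
move=> itx ch ar; rewrite /lev.
case: (eqVneq a x) => [->|ax] /=; first by rewrite chain_last // top_nr.
apply: (asbool_equiv_eqP idP); apply: iff_trans (anc_chain (r0 hOC) ch a) _.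
rewrite in_cons (negbTE ar) /=; split => [[]|] //; by move=> h; split => //; apply/eqP.
Qed.

Lemma v_nr : v != rt. Proof. exact: top_nr itv. Qed.
Lemma t_nr : t != rt. Proof. exact: top_nr itt. Qed.

Lemma anc'p x : in_top N x -> `[< is_ancestor N' p x >] = lev v x.
Proof.
move=> itx; have [c ch] := chain_ex hOC itx.
rewrite (lev_chain itx ch v_nr).
apply: (asbool_equiv_eqP idP); apply: iff_trans (anc_chain r0' (chain_ins ch) p) _.
have [xp _ _ _] := p_neq_V (in_top_V hOC itx).
have [rp _ _ _] := p_neq_V (rV hOC).
rewrite rootN' in_cons eq_sym (negbTE rp) /= mem_inscp; last first.
  by apply/negP => /(chainV ch) pV'; have [] := p_neq_V pV'; rewrite eqxx.
split => [[]|] // h; split => //; apply/eqP; by rewrite eq_sym.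
Qed.

Lemma anc'q x : in_top N x -> `[< is_ancestor N' q x >] = lev t x.
Proof.
move=> itx; have [c ch] := chain_ex hOC itx.
rewrite (lev_chain itx ch t_nr).
apply: (asbool_equiv_eqP idP); apply: iff_trans (anc_chain r0' (chain_ins ch) q) _.
have [_ xq _ _] := p_neq_V (in_top_V hOC itx).
have [_ rq _ _] := p_neq_V (rV hOC).
rewrite rootN' in_cons eq_sym (negbTE rq) /= mem_inscq; last first.
  by apply/negP => /(chainV ch) pV'; have [] := p_neq_V pV'; rewrite eqxx.
split => [[]|] // h; split => //; apply/eqP; by rewrite eq_sym.
Qed.

Lemma anc'rl x z : in_top N x -> z \notin VN -> z != p -> z != q -> `[< is_ancestor N' z x >] = false.
Proof.
move=> itx zV zp zq; have [c ch] := chain_ex hOC itx.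
apply: asboolF; rewrite (anc_chain r0' (chain_ins ch) z) => [[_]].
rewrite rootN' in_cons mem_inscV // => /orP[/eqP zr|/(chainV ch)]; last by rewrite (negbTE zV).
by move: zV; rewrite zr (rV hOC).
Qed.


Lemma alpha'x x : in_top N x -> alpha N' x = alpha N x + lev v x + lev t x.
Proof.
move=> itx; rewrite /alpha VN' count_cat /= anc'p // anc'q //.
have [_ _ _ rV0] := p_neq_V (rV hOC).
rewrite !anc'rl //; try (by apply/eqP; lia); try exact: rV'; try exact: lV.
rewrite (@eq_in_count _ _ (fun u => `[< is_ancestor N u x >])); first by rewrite /= !addn0 addnA.
by move=> y yV; apply: asbool_equiv_eq; exact: anc'V.
Qed.

Lemma chain_split a c : chain N a c -> a != rt -> exists c', [/\ c = rcons c' a, arc (last rt c') a & chain N (last rt c') c'].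
Proof.
move=> [pc lc ac] ar.
case/lastP: c pc lc ac => [/= _ la _|c' a' pc lc ac]; first by rewrite la eqxx in ar.
rewrite last_rcons in lc; subst a'.
move: pc; rewrite rcons_path => /andP[pc' ar']; move: ac; rewrite all_rcons => /andP[_ ac'].
by exists c'; split.
Qed.

Lemma notin_pre a c' : path arc rt (rcons c' a) -> a \notin rt :: c'.
Proof.
rewrite rcons_path in_cons => /andP[pc ar]; apply/negP => /orP[/eqP ar'|ac].
  by move: ar; rewrite ar' => ar; have := no_arc_in (last rt c') (r0 hOC); rewrite ar.
case/splitPr: ac pc ar => c1 c2; rewrite cat_path /= last_cat /= => /andP[_ /andP[_ p2]] ar.
apply: (cyc_of hOC (w := a) (c := rcons c2 a)); first by rewrite rcons_path p2 ar.
by rewrite mem_rcons mem_head.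
Qed.


Lemma chain_p : exists c', [/\ chain N' p (rcons (insc c') p), chain N v (rcons c' v) & forall y, y \in c' -> y \in VN].
Proof.
have [c ch] := chain_ex hOC itv; have [c' [ec av ch']] := chain_split ch v_nr.
have lu : last rt c' = u by exact: in_arc_unique iv1 av a1.
rewrite lu in ch'; have [pc lc ac] := chain_ins ch'.
have [n1 _ _ _ _] := arc'_new.
exists c'; split; first split.
- by rewrite rcons_path pc lc.
- by rewrite last_rcons.
- by rewrite all_rcons ac degp.1.
- by rewrite -ec.
- exact: chainV ch'.
Qed.

Lemma chain_q : exists c', [/\ chain N' q (rcons (insc c') q), chain N t (rcons c' t) & forall y, y \in c' -> y \in VN].
Proof.
have [c ch] := chain_ex hOC itt; have [c' [ec av ch']] := chain_split ch t_nr.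
have lu : last rt c' = s by exact: in_arc_unique it1 av a2.
rewrite lu in ch'; have [pc lc ac] := chain_ins ch'.
have [_ _ n3 _ _] := arc'_new.
exists c'; split; first split.
- by rewrite rcons_path pc lc.
- by rewrite last_rcons.
- by rewrite all_rcons ac degq.1.
- by rewrite -ec.
- exact: chainV ch'.
Qed.

Lemma alpha'p : alpha N' p = alpha N v + `[< is_ancestor N t v >].
Proof.
have [c' [chp chv c'V]] := chain_p.
have nv := notin_pre (let: And3 pc _ _ := chv in pc).
rewrite /alpha VN' count_cat /= !(anc_bool r0' chp) !(anc_bool (r0 hOC) chv) rootN'.
have [rp rq rr rl] := p_neq_V (rV hOC).
have [tp tq tr tl] := p_neq_V tV.
have [? ? ? ?] := freshs.
have qc' : q \notin c' by apply/negP => /c'V; rewrite (negbTE qV).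
rewrite !in_cons !mem_rcons !in_cons eqxx mem_inscq //.
rewrite (mem_inscV (y := r)) ?(mem_inscV (y := l)); try (by apply/eqP; lia).
have -> : r \in c' = false by apply/negP => /c'V; rewrite (negbTE rV').
have -> : l \in c' = false by apply/negP => /c'V; rewrite (negbTE lV).
kill_eqs; rewrite (eq_sym t) (negbTE t_nr) (negbTE vt) /= !addn0.
congr (_ + _); apply: eq_in_count => y yV /=.
have [yp yq _ _] := p_neq_V yV.
rewrite (anc_bool r0' chp) (anc_bool (r0 hOC) chv) rootN' !in_cons !mem_rcons !in_cons.
rewrite yp (negbTE yp) mem_inscV //=.
case: (eqVneq y v) => [yv|] //=; subst y.
by move: nv; rewrite in_cons negb_or => /andP[/negbTE -> /negbTE ->].
Qed.

Lemma alpha'q : alpha N' q = alpha N t + `[< is_ancestor N v t >].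
Proof.
have [c' [chp chv c'V]] := chain_q.
have nv := notin_pre (let: And3 pc _ _ := chv in pc).
rewrite /alpha VN' count_cat /= !(anc_bool r0' chp) !(anc_bool (r0 hOC) chv) rootN'.
have [rp rq rr rl] := p_neq_V (rV hOC).
have [tp tq tr tl] := p_neq_V vV.
have [? ? ? ?] := freshs.
have qc' : p \notin c' by apply/negP => /c'V; rewrite (negbTE pV).
rewrite !in_cons !mem_rcons !in_cons eqxx mem_inscp //.
rewrite (mem_inscV (y := r)) ?(mem_inscV (y := l)); try (by apply/eqP; lia).
have -> : r \in c' = false by apply/negP => /c'V; rewrite (negbTE rV').
have -> : l \in c' = false by apply/negP => /c'V; rewrite (negbTE lV).
have tv : (v == t) = false by rewrite (negbTE vt).
kill_eqs; rewrite (negbTE v_nr) /= !addn0.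
congr (_ + _); apply: eq_in_count => y yV /=.
have [yp yq _ _] := p_neq_V yV.
rewrite (anc_bool r0' chp) (anc_bool (r0 hOC) chv) rootN' !in_cons !mem_rcons !in_cons.
rewrite yq (negbTE yq) mem_inscV //=.
case: (eqVneq y t) => [yv|] //=; subst y.
by move: nv; rewrite in_cons negb_or => /andP[/negbTE -> /negbTE ->].
Qed.


Lemma itp : in_top N' p.
Proof.
have [c [chp _ _]] := chain_p.
rewrite /in_top /is_tree VN' mem_cat !inE eqxx orbT degp.1 degp.2 /=.
by apply/asboolP; exact: (nodesc_chain r0' chp).
Qed.

Lemma itq : in_top N' q.
Proof.
have [c [chp _ _]] := chain_q.
rewrite /in_top /is_tree VN' mem_cat !inE eqxx !orbT degq.1 degq.2 /=.
by apply/asboolP; exact: (nodesc_chain r0' chp).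
Qed.

Lemma itr : in_top N' r = false.
Proof. by rewrite /in_top /is_tree /is_leaf degr.1 /= !andbF. Qed.

Lemma itl : in_top N' l = false.
Proof.
rewrite /in_top; apply/negP => /andP[_ /asboolP]; apply.
have [_ _ _ _ [_ _ n7]] := arc'_new.
exists r; split; last by exists [:: l]; rewrite /= n7.
by rewrite /is_ret VN' mem_cat !inE eqxx !orbT degr.1 degr.2.
Qed.

Lemma AC' : A_C N' = \sum_(x <- VN | in_top N x) (alpha N x + lev v x + lev t x)
   + (alpha N v + `[< is_ancestor N t v >]) + (alpha N t + `[< is_ancestor N v t >]).
Proof.
rewrite /A_C VN' big_cat /= !big_cons big_nil itp itq itr itl /= alpha'p alpha'q addn0 addnA.
congr (_ + _ + _); rewrite big_seq_cond [RHS]big_seq_cond; apply: eq_big => x.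
  by case xV: (x \in VN) => //=; rewrite in_top'V.
by move=> /andP[xV]; rewrite in_top'V // => itx; rewrite alpha'x.
Qed.

End Ins.

End G3.
Import G3.

Module G4.
Set Implicit Arguments. Unset Strict Implicit. Unset Printing Implicit Defensive.

Lemma pairs_sum (m : nat) (b : nat -> nat -> nat) :
  \sum_(i < m) \sum_(i' < m | i < i') (b i i' + b i' i) + \sum_(i < m) b i i
  = \sum_(i < m) \sum_(i' < m) b i i'.
Proof.
have E1 : forall i : 'I_m, \sum_(i' < m) b i i' =
    \sum_(i' < m | i < i') b i i' + \sum_(i' < m | i' < i) b i i' + b i i.
  move=> i; rewrite (bigID (fun i' : 'I_m => i < i')) /=; rewrite -addnA; congr (_ + _).
  rewrite (bigD1 i) /=; last by rewrite ltnn.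
  rewrite addnC; congr (_ + _); apply: eq_bigl => i'.
  by rewrite -leqNgt ltn_neqAle andbC.
rewrite (eq_bigr _ (fun i _ => E1 i)).
under [in LHS]eq_bigr do rewrite big_split.
rewrite !big_split /= -!addnA; congr (_ + _); congr (_ + _).
under eq_bigr do rewrite big_mkcond. under [RHS]eq_bigr do rewrite big_mkcond.
by rewrite exchange_big.
Qed.

Section Sums.
Variable N : net.
Variables k j : nat.
Hypothesis hOC : is_OC N k j.
Local Notation rt := (Defs.root N).
Local Notation VN := (Defs.V N).
Local Notation g a b := (`[< is_ancestor N a b >] : nat).

Lemma sum_filter_eq y : in_top N y -> \sum_(x <- VN | in_top N x) ((x == y) : nat) = 1.
Proof.
move=> ity; rewrite -big_filter -count_sum.
have := count_uniq_mem y (filter_uniq (in_top N) (G2.uV hOC)).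
by rewrite mem_filter ity (in_top_V hOC ity) /= => <-.
Qed.

Lemma K x : in_top N x -> alpha N x = \sum_(y <- VN | in_top N y) g y x + 1.
Proof.
move=> itx; rewrite /alpha count_sum (bigID (in_top N)) /=; congr (_ + _).
rewrite (eq_bigr (fun y => ((y == rt) : nat))); last first.
  move=> y nty; case: (eqVneq y rt) => [->|yr].
    by rewrite asboolT //; exact: (anc_root hOC itx).
  rewrite asboolF // => /(anc_top hOC itx) [yr'|ity]; first by move: yr; rewrite yr' eqxx.
  by rewrite ity in nty.
rewrite -big_filter -count_sum.
have ntr : in_top N rt = false by apply/negP => /(top_nr hOC) /eqP.
have := count_uniq_mem rt (filter_uniq (predC (in_top N)) (G2.uV hOC)).
rewrite mem_filter (rV hOC) /= ntr /= => <-.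
by apply: eq_count.
Qed.

Lemma lev_split a x : (lev N a x : nat) = ((a == x) : nat) + g a x.
Proof.
rewrite /lev; case: (eqVneq a x) => [->|] //=.
by rewrite asboolF // => [[]].
Qed.

Lemma sum_lev y : in_top N y -> \sum_(x <- VN | in_top N x) (lev N x y : nat) = alpha N y.
Proof.
move=> ity; rewrite (eq_bigr _ (fun x _ => lev_split x y)) big_split /=.
by rewrite sum_filter_eq // (K ity) addnC.
Qed.

Lemma sumF : \sum_(x <- VN | in_top N x) (\sum_(y <- VN | in_top N y) (lev N x y : nat) + alpha N x)
   = 2 * A_C N.
Proof.
rewrite big_split /= exchange_big /= /A_C mul2n -addnn; congr (_ + _).
by rewrite big_seq_cond [RHS]big_seq_cond; apply: eq_bigr => y /andP[_ ity]; rewrite sum_lev.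
Qed.

Lemma sumG : \sum_(x <- VN | in_top N x) \sum_(y <- VN | in_top N y) g y x
   + size (filter (in_top N) VN) = A_C N.
Proof.
rewrite /A_C size_filter count_sum big_mkcond [X in _ + X]big_mkcond -big_split /=.
rewrite [RHS]big_mkcond /=; apply: eq_big_seq => x xV.
by case itx: (in_top N x) => //; rewrite (K itx).
Qed.

End Sums.

End G4.
Import G4.

Module G5.
Set Implicit Arguments. Unset Strict Implicit. Unset Printing Implicit Defensive.

Section Main.
Variable N : net.
Variables k j : nat.
Hypothesis hk : 1 <= k.
Hypothesis hOC : is_OC N k j.
Local Notation VN := (Defs.V N).
Local Notation T := (ToT N).
Local Notation m := (size (ToT N)).
Local Notation s := (map snd (ToT N)).
Local Notation A := (A_C N).
Local Notation G a b := (`[< is_ancestor N a b >] : nat).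
Definition F x := \sum_(y <- VN | in_top N y) (lev N x y : nat) + alpha N x.
Definition b i i' := F (nth 0 s i) + G (nth 0 s i') (nth 0 s i).

Lemma sum_ord_s (H : nat -> nat) : \sum_(i < m) H (nth 0 s i) = \sum_(x <- VN | in_top N x) H x.
Proof.
rewrite -big_filter -(perm_big _ (ToT_perm hOC)) /= (big_nth 0) size_map big_mkord.
by [].
Qed.

Lemma uT : uniq T. Proof. exact: filter_uniq (uE hOC). Qed.

Lemma step1 (i i' : 'I_m) : i < i' ->
  A_C (insert_ret (k + j) N (nth (0, 0) T i) (nth (0, 0) T i')) = A + (b i i' + b i' i).
Proof.
move=> ii'.
have h1 : nth (0, 0) T i \in T by apply: mem_nth.
have h2 : nth (0, 0) T i' \in T by apply: mem_nth.
have h12 : nth (0, 0) T i != nth (0, 0) T i'.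
  by rewrite nth_uniq ?uT //; apply: contraTneq ii' => ->; rewrite ltnn.
rewrite (@AC' N k j (k + j) hOC _ _ h1 h2 h12) !big_split /=.
rewrite /b /F !(nth_map (0, 0)) //.
rewrite /A_C; lia.
Qed.

Lemma nat_main : \sum_(i < m) \sum_(i' < m | i < i')
       A_C (insert_ret (k + j) N (nth (0, 0) T i) (nth (0, 0) T i'))
   + (2 * (k + j) - 1) = (2 * (k + j) ^ 2 + (k + j) - 2) * A.
Proof.
have E1 : \sum_(i < m) \sum_(i' < m | i < i')
       A_C (insert_ret (k + j) N (nth (0, 0) T i) (nth (0, 0) T i'))
   = \sum_(i < m) \sum_(i' < m | i < i') A + \sum_(i < m) \sum_(i' < m | i < i') (b i i' + b i' i).
  rewrite -big_split /=; apply: eq_bigr => i _; rewrite -big_split /=.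
  by apply: eq_bigr => i' ii'; rewrite step1.
have E2 := pairs_sum m (fun _ _ => A).
rewrite (eq_bigr (fun i : 'I_m => 2 * \sum_(i' < m | i < i') A)) in E2; last first.
  by move=> i _; rewrite big_split /= addnn mul2n.
rewrite -big_distrr /= in E2.
rewrite !big_const_ord !iter_addn_0 in E2.
have E3 := pairs_sum m b.
have bii : forall i : 'I_m, b i i = F (nth 0 s i).
  by move=> i; rewrite /b asboolF ?addn0 // => [[]].
rewrite (eq_bigr _ (fun i _ => bii i)) in E3.
have E4 : \sum_(i < m) \sum_(i' < m) b i i' = m * \sum_(x <- VN | in_top N x) F x
     + \sum_(x <- VN | in_top N x) \sum_(y <- VN | in_top N y) G y x.
  rewrite -(sum_ord_s F) -(sum_ord_s (fun x => \sum_(y <- VN | in_top N y) G y x)).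
  rewrite big_distrr -big_split /=; apply: eq_bigr => i _.
  rewrite /b big_split /= -(sum_ord_s (fun y => G y (nth 0 s i))).
  by rewrite big_const_ord iter_addn_0 mulnC.
rewrite E4 (sum_ord_s F) in E3.
rewrite /F (sumF hOC) in E3.
have E5 := sumG hOC.
have E6 := size_C hOC.
have Em : m = size (filter (in_top N) VN) by rewrite -(perm_size (ToT_perm hOC)) size_map.
rewrite -Em in E5 E6.
rewrite E1.
set P := \sum_(i < m) \sum_(i' < m | i < i') A in E2 *.
set Y := \sum_(i < m) \sum_(i' < m | i < i') (b i i' + b i' i) in E3 *.
set Z := \sum_(x <- VN | in_top N x) \sum_(y <- VN | in_top N y) G y x in E3 E5.
clear E1 E4 bii Em.
move: P Y Z E2 E3 E5 => P Y Z E2 E3 E5.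
have [n' hn'] : exists n', k + j = n'.+1 by exists (k + j).-1; lia.
rewrite hn' in E6 *.
have Em : m = 2 * n' + 1 by lia.
rewrite Em in E2 E3 E5.
move: (m) Em => m0 _.
have EP : P = A * n' * (2 * n' + 1) by nia.
subst P; nia.
Qed.

End Main.

End G5.
Import G5.

Unset Implicit Arguments.
Local Open Scope ring_scope.

Theorem mainTheorem7 (k j : nat) (N : net) :
  (1 <= k)%N -> is_OC N k j ->
  ((\sum_(i < size (ToT N)) \sum_(i' < size (ToT N) | (i < i')%N)
       A_C (insert_ret (k + j) N (nth (0, 0)%N (ToT N) i) (nth (0, 0)%N (ToT N) i')))%N)%:Z
  = ((2 * (k + j) ^ 2 + (k + j))%N%:Z - 2) * (A_C N)%:Z - ((2 * (k + j))%N%:Z - 1).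
Proof.
move=> hk hOC; have := nat_main hk hOC.
set S := (\sum_(i < _) _)%N.
move: S (A_C N) => S A h.
have hA : ((2 * (k + j) ^ 2 + (k + j) - 2) * A)%N = ((2 * (k + j) ^ 2 + (k + j))%N * A - 2 * A)%N.
  by rewrite mulnBl.
lia.
Qed.
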